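(* Fix integers $n\ge 1$, $m\ge 2$ and $k\in\{0,\dots,n-1\}$, and let $\mathcal{C}^k_{ac}$ be the class of all complete acyclic $k$-bounded CP-nets over $n$ variables, each of domain size $m$, viewed as concepts over the instance space $\mathcal{X}_{swap}$. Then: (1) $\mathrm{VCD}(\mathcal{C}^{n-1}_{ac})=m^n-1$; (2) $\mathrm{VCD}(\mathcal{C}^{0}_{ac})=(m-1)n$; (3) $\mathrm{VCD}(\mathcal{C}^{k}_{ac})\ge (m-1)\mathcal{M}_k=(m-1)(n-k)m^k+m^k-1$.
   Context: Variables $V=\{v_1,\dots,v_n\}$, each $v_i$ with a finite domain $D_{v_i}$ of size $m$. An outcome is an assignment of a value to every variable; $\mathcal{O}$ is the set of outcomes, and for $X\subseteq V$, $\mathcal{O}_X$ is the set of assignments to $X$ and $o[X]$ the projection of $o$ onto $X$. A CP-net $N$ specifies for each $v_i$ a parent set $Pa(v_i)\subseteq V\setminus\{v_i\}$ and a conditional preference table $\mathrm{CPT}(v_i)$ which, for each context $\gamma\in\mathcal{O}_{Pa(v_i)}$, either gives a strict total order $\succ^{v_i}_\gamma$ on $D_{v_i}$ (a ''statement'') or gives nothing. $N$ is complete if every CPT gives an order for every context. CP-nets are taken in minimal form: every parent actually affects the preferences of its child (no dummy parents). The graph of $N$ has an edge $(v_j,v_i)$ iff $v_j\in Pa(v_i)$; $N$ is acyclic if this graph is acyclic and $k$-bounded if $|Pa(v_i)|\le k$ for all $i$. For outcomes $o,o'$ differing only in $v_i$, with $\gamma=o[Pa(v_i)]$, going from $o$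 to $o'$ is an improving flip if $\succ^{v_i}_\gamma$ is given and $o'[v_i]\succ^{v_i}_\gamma o[v_i]$; $N$ induces the relation $o'\succ o$ iff there is a nonempty finite sequence of improving flips from $o$ to $o'$. A swap is an ordered pair $x=(x.1,x.2)$ of outcomes differing in exactly one variable. $\mathcal{X}_{swap}$ is a fixed set of swaps containing, for each unordered pair of outcomes differing in exactly one variable, exactly one of the two ordered pairs (the choice is arbitrary but fixed). A CP-net $N$ is identified with the concept $c_N$ given by $c_N(x)=1$ if $x.1\succ x.2$ under $N$ and $c_N(x)=0$ otherwise. A set $Y$ of instances is shattered by a concept class if every labeling of $Y$ is realized by some concept of the class; $\mathrm{VCD}$ is the largest size of a shattered set. $\mathcal{M}_k=(n-k)m^k+\frac{m^k-1}{m-1}$. *)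

(* Defs.v *)
From mathcomp Require Import all_boot all_order fingroup perm.
Set Implicit Arguments. Unset Strict Implicit. Unset Printing Implicit Defensive.

Definition outcome (n m : nat) := {ffun 'I_n -> 'I_m}.

(* The CPT of v_i
   is given as a function of the whole outcome, required (well-formedness)
   to depend only on the projection onto Pa(v_i); the strict total order
   ≻ on 'I_m is encoded by a ranking permutation r:  x ≻ y  iff  r x < r y. *)
Record CPnet (n m : nat) := mkCPnet {
  Pa  : 'I_n -> {set 'I_n};
  cpt : 'I_n -> outcome n m -> {perm 'I_m} }.

Definition prefers (m : nat) (r : {perm 'I_m}) (x y : 'I_m) : bool := r x < r y.

Definition differ_only_at n m (i : 'I_n) (o o' : outcome n m) : bool :=
  [forall l, (l != i) ==> (o l == o' l)] && (o i != o' i).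

Definition is_swap n m (o o' : outcome n m) : bool :=
  [exists i, differ_only_at i o o'].

Definition wf_cpnet n m (N : CPnet n m) : Prop :=
  (forall i, i \notin Pa N i) /\
  (forall i (o o' : outcome n m),
      (forall j, j \in Pa N i -> o j = o' j) -> cpt N i o = cpt N i o') /\
  (forall i j, j \in Pa N i ->
      exists o o' : outcome n m,
        (forall l, l != j -> o l = o' l) /\ cpt N i o <> cpt N i o').

Definition cp_edge n m (N : CPnet n m) : rel 'I_n := fun j i => j \in Pa N i.

Definition acyclic_cpnet n m (N : CPnet n m) : Prop :=
  forall i j, cp_edge N j i -> ~~ connect (cp_edge N) i j.

Definition k_bounded n m (k : nat) (N : CPnet n m) : Prop :=
  forall i, #|Pa N i| <= k.

Definition improving_flip n m (N : CPnet n m) : rel (outcome n m) :=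
  fun o o' => [exists i, differ_only_at i o o' && prefers (cpt N i o) (o' i) (o i)].

Definition cp_better n m (N : CPnet n m) (o' o : outcome n m) : bool :=
  [exists o1, improving_flip N o o1 && connect (improving_flip N) o1 o'].

Definition concept n m (N : CPnet n m) (x : outcome n m * outcome n m) : bool :=
  cp_better N x.1 x.2.

Definition in_Cac n m (k : nat) (N : CPnet n m) : Prop :=
  wf_cpnet N /\ acyclic_cpnet N /\ k_bounded k N.

Definition swap_space n m (X : {set outcome n m * outcome n m}) : Prop :=
  (forall x, x \in X -> is_swap x.1 x.2) /\
  (forall o o' : outcome n m, is_swap o o' ->
      ((o, o') \in X) (+) ((o', o) \in X)).

Definition shattered n m (k : nat) (Y : {set outcome n m * outcome n m}) : Prop :=
  forall f : outcome n m * outcome n m -> bool,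
    exists N : CPnet n m, in_Cac k N /\ forall x, x \in Y -> concept N x = f x.

(* VC dimension of C^k_ac over instance space X:  VCD_is k X d  means d is
   the largest size of a subset of X shattered by C^k_ac (a maximum exists
   since X is finite and the empty set is shattered). *)
Definition VCD_is n m (k : nat) (X : {set outcome n m * outcome n m}) (d : nat) : Prop :=
  (exists Y : {set outcome n m * outcome n m},
      Y \subset X /\ shattered k Y /\ #|Y| = d) /\
  (forall Y : {set outcome n m * outcome n m},
      Y \subset X -> shattered k Y -> #|Y| <= d).

Definition VCD_ge n m (k : nat) (X : {set outcome n m * outcome n m}) (b : nat) : Prop :=
  exists Y : {set outcome n m * outcome n m},
    Y \subset X /\ shattered k Y /\ b <= #|Y|.

(* Main.v *)
Require Import Defs.
From mathcomp Require Import all_boot fingroup perm.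
From mathcomp Require Import zify.
Set Implicit Arguments. Unset Strict Implicit. Unset Printing Implicit Defensive.


Section Basic.
Variables n m : nat.
Implicit Types o : outcome n m.
Implicit Types N : CPnet n m.

Lemma differ_agree i o o' : differ_only_at i o o' -> forall l, l != i -> o l = o' l.
Proof. by case/andP=> /forallP H _ l hl; move: (H l); rewrite hl => /eqP. Qed.

Lemma differ_neq i o o' : differ_only_at i o o' -> o i != o' i.
Proof. by case/andP. Qed.

Lemma differ_sym i o o' : differ_only_at i o o' = differ_only_at i o' o.
Proof.
rewrite /differ_only_at [o' i == _]eq_sym; congr andb; apply/eq_forallb => l.
by rewrite [o' l == _]eq_sym.
Qed.

Lemma cpt_eq N i o o' : wf_cpnet N -> differ_only_at i o o' -> cpt N i o = cpt N i o'.
Proof.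
rewrite /wf_cpnet => -[h1 [h2 _]] hd; apply: h2 => j hj; apply: (differ_agree hd).
by apply/eqP => eji; move: hj; rewrite eji (negbTE (h1 i)).
Qed.

Lemma cpt_eq_other N i l o o' : wf_cpnet N -> differ_only_at i o o' -> i \notin Pa N l ->
  cpt N l o = cpt N l o'.
Proof.
rewrite /wf_cpnet => -[h1 [h2 _]] hd hi; apply: h2 => j hj; apply: (differ_agree hd).
by apply/eqP => eji; move: hj hi; rewrite eji => ->.
Qed.

Definition desc N (i : 'I_n) := [set u | connect (cp_edge N) i u].
Definition B := (n * m).+1.
Definition wt N i := B ^ #|desc N i|.
Definition rk N l o : nat := cpt N l o (o l).
Definition Phi N o := \sum_(l < n) wt N l * rk N l o.

Lemma child_wt N i l : acyclic_cpnet N -> i \in Pa N l -> wt N l * B <= wt N i.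
Proof.
move=> hac hil; rewrite /wt -expnSr leq_pexp2l //; apply: proper_card.
apply/properP; split.
  apply/subsetP => y; rewrite !inE => hy; apply: connect_trans hy.
  exact: connect1.
exists i; first by rewrite inE connect0.
by rewrite inE; apply: hac.
Qed.

Lemma flip_decr N o o' : wf_cpnet N -> acyclic_cpnet N ->
  improving_flip N o o' -> Phi N o' < Phi N o.
Proof.
move=> hwf hac /existsP[i /andP[hd hp]].
have ci : cpt N i o' = cpt N i o by apply/esym/(cpt_eq hwf hd).
have H3 : rk N i o' < rk N i o by rewrite /rk ci.
rewrite /Phi (bigD1 i) //= [X in _ < X](bigD1 i) //=.
set A' := \sum_(l < n | l != i) _.
set A := \sum_(l < n | l != i) _.
set S := \sum_(l < n | l != i) (if i \in Pa N l then wt N l * m else 0).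
have H1 : A' <= A + S.
  rewrite /A' /A /S -big_split /=; apply: leq_sum => l hl.
  case: ifP => hP.
    have : rk N l o' < m by rewrite /rk; case: (cpt N l o' (o' l)).
    move=> h; apply: leq_trans (leq_addl _ _); rewrite leq_mul2l; apply/orP; right.
    exact: ltnW.
  rewrite addn0 /rk (cpt_eq_other hwf hd) ?hP // (differ_agree hd hl).
  done.
have H2 : S * B <= n * m * wt N i.
  rewrite /S big_distrl /=.
  apply: (@leq_trans (\sum_(l < n | l != i) m * wt N i)).
    apply: leq_sum => l _; case: ifP => hP; last by [].
    by rewrite mulnAC mulnC leq_mul2l (child_wt hac hP) orbT.
  apply: (@leq_trans (\sum_(l < n) m * wt N i)).
    by rewrite [X in _ <= X](bigD1 i) //= leq_addl.
  by rewrite sum_nat_const card_ord mulnA.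
have H4 : S < wt N i.
  have hB : n * m < B by rewrite /B.
  have : S * B < B * wt N i.
    apply: leq_ltn_trans H2 _; rewrite ltn_pmul2r //.
    by rewrite /wt expn_gt0.
  by rewrite mulnC ltn_pmul2l.
have H5 : wt N i * rk N i o' + wt N i <= wt N i * rk N i o.
  by rewrite -[X in _ + X]muln1 -mulnDr addn1 leq_mul2l H3 orbT.
lia.
Qed.

Lemma connect_decr N a b : wf_cpnet N -> acyclic_cpnet N ->
  connect (improving_flip N) a b -> Phi N b <= Phi N a.
Proof.
move=> hwf hac /connectP[p hp ->]; elim: p a hp => //= c p IH a /andP[h1 h2].
apply: leq_trans (IH _ h2) _; apply: ltnW; exact: flip_decr.
Qed.

Lemma better_decr N a b : wf_cpnet N -> acyclic_cpnet N ->
  cp_better N a b -> Phi N a < Phi N b.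
Proof.
move=> hwf hac /existsP[o1 /andP[h1 h2]].
exact: leq_ltn_trans (connect_decr hwf hac h2) (flip_decr hwf hac h1).
Qed.

Lemma concept_swap N i (x : outcome n m * outcome n m) : wf_cpnet N -> acyclic_cpnet N ->
  differ_only_at i x.1 x.2 ->
  concept N x = prefers (cpt N i x.2) (x.1 i) (x.2 i).
Proof.
move=> hwf hac hd; case hpr: (prefers _ _ _).
  apply/existsP; exists x.1; rewrite connect0 andbT; apply/existsP; exists i.
  by rewrite -differ_sym hd.
apply/negbTE/negP => hb.
have hfl : improving_flip N x.1 x.2.
  apply/existsP; exists i; rewrite hd /= /prefers (cpt_eq hwf hd).
  move: hpr; rewrite /prefers => /negbT; rewrite -leqNgt leq_eqVlt.
  case/orP=> [/eqP/val_inj/perm_inj e|//].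
  by move: (differ_neq hd); rewrite e eqxx.
have := flip_decr hwf hac hfl; have := better_decr hwf hac hb; rewrite /=; lia.
Qed.

Lemma concept_Phi N (x : outcome n m * outcome n m) : wf_cpnet N -> acyclic_cpnet N ->
  is_swap x.1 x.2 ->
  if concept N x then Phi N x.1 < Phi N x.2 else Phi N x.2 < Phi N x.1.
Proof.
move=> hwf hac /existsP[i hd]; case hc: (concept N x).
  exact: (better_decr hwf hac hc).
move: hc; rewrite (concept_swap hwf hac hd) => hpr.
apply: (flip_decr hwf hac); apply/existsP; exists i; rewrite hd /= /prefers (cpt_eq hwf hd).
move: hpr; rewrite /prefers => /negbT; rewrite -leqNgt leq_eqVlt.
case/orP=> [/eqP/val_inj/perm_inj e|//].
by move: (differ_neq hd); rewrite e eqxx.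
Qed.

End Basic.


Section Forest.
Variable V : finType.

Definition adj (S : {set V * V}) : rel V := fun u v => ((u, v) \in S) || ((v, u) \in S).
Definition cls S (x : V) := [set y | connect (adj S) x y].
Definition classes S := [set cls S x | x in [set: V]].

Definition realizable (Y : {set V * V}) := forall f : V * V -> bool,
  exists Phi : V -> nat, forall x, x \in Y ->
    if f x then Phi x.1 < Phi x.2 else Phi x.2 < Phi x.1.

Lemma adj_sym S : symmetric (adj S).
Proof. by move=> u v; rewrite /adj orbC. Qed.

Lemma no_cycle (Y S : {set V * V}) e : realizable Y -> S \subset Y -> e \in Y -> e \notin S ->
  ~~ connect (adj S) e.1 e.2.
Proof.
move=> hR hS hY heS; apply/negP => /connectP[p hp hl].
move: hl; case/shortenP: hp => p' hp' hu _ hl.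
pose s := e.1 :: p'.
pose f x := if x == e then true else index x.2 s < index x.1 s.
have [Phi hPhi] := hR f.
have he := hPhi e hY; rewrite /f eqxx in he.
have fe x : x != e -> f x = (index x.2 s < index x.1 s) by rewrite /f => /negbTE ->.
have step j : j < size p' -> Phi (nth e.1 s j.+1) < Phi (nth e.1 s j).
  move=> hj; have := (elimT (pathP e.1) hp') j hj.
  rewrite -[nth e.1 p' j]/(nth e.1 s j.+1).
  set u := nth e.1 s j; set v := nth e.1 s j.+1.
  have iu : index u s = j by rewrite index_uniq //= ltnS ltnW.
  have iv : index v s = j.+1 by rewrite index_uniq.
  rewrite /adj => /orP[] hx.
    have hxe : (u, v) != e by apply: contraNneq heS => <-.
    have := hPhi _ (subsetP hS _ hx); rewrite (fe _ hxe).
    have iu' : index (u, v).1 s = j := iu.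
    have iv' : index (u, v).2 s = j.+1 := iv.
    by rewrite iu' iv' ltnNge leqnSn.
  have hxe : (v, u) != e by apply: contraNneq heS => <-.
  have := hPhi _ (subsetP hS _ hx); rewrite (fe _ hxe).
  have iu' : index (v, u).2 s = j := iu.
  have iv' : index (v, u).1 s = j.+1 := iv.
  by rewrite iu' iv' ltnSn.
have chain j : j <= size p' -> Phi (nth e.1 s j) + j <= Phi e.1.
  elim: j => [|j IH] hj; first by rewrite addn0.
  have := step j hj; have := IH (ltnW hj); lia.
have := chain _ (leqnn _); rewrite -last_nth -hl; lia.
Qed.

Lemma cls_mem S x : x \in cls S x.
Proof. by rewrite inE connect0. Qed.

Lemma forest_step (Y S : {set V * V}) e : realizable Y -> S \subset Y -> e \in Y -> e \notin S ->
  #|classes (e |: S)| < #|classes S|.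
Proof.
move=> hR hS hY heS.
pose S' := e |: S.
pose g (C : {set V}) := [set y | [exists x in C, connect (adj S') x y]].
have sub : subrel (connect (adj S)) (connect (adj S')).
  apply: connect_sub => u v h; apply: connect1.
  by rewrite /adj /S' !inE; case/orP: h => ->; rewrite !orbT.
have gc x : g (cls S x) = cls S' x.
  apply/setP => y; rewrite !inE; apply/existsP/idP.
    by case=> z /andP[]; rewrite inE => /sub h1 h2; apply: connect_trans h1 h2.
  by move=> h; exists x; rewrite cls_mem.
have -> : classes S' = g @: classes S.
  rewrite /classes -imset_comp; apply: eq_imset => x /=; by rewrite gc.
have hlt := leq_imset_card g (classes S).
rewrite ltn_neqAle hlt andbT; apply/negP => /imset_injP hinj.
have h1 : cls S e.1 \in classes S by apply: imset_f; rewrite inE.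
have h2 : cls S e.2 \in classes S by apply: imset_f; rewrite inE.
have hge : g (cls S e.1) = g (cls S e.2).
  rewrite !gc; apply/setP => y; rewrite !inE.
  have hc : connect (adj S') e.1 e.2.
    by apply: connect1; rewrite /adj !inE -surjective_pairing eqxx.
  apply/idP/idP => h.
    apply: connect_trans h; rewrite (sym_connect_sym (@adj_sym S')); exact: hc.
  exact: connect_trans hc h.
have := hinj _ _ h1 h2 hge => hcc.
have := cls_mem S e.2; rewrite -hcc inE => hcon.
by move: (no_cycle hR hS hY heS); rewrite hcon.
Qed.

Lemma forest_bound Y : realizable Y -> #|Y| <= #|V| - 1.
Proof.
move=> hR.
have main k : forall S : {set V * V}, #|S| = k -> S \subset Y -> #|S| + #|classes S| <= #|V|.
  elim: k => [|k IH] S hk hS.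
    rewrite hk add0n; apply: leq_trans (leq_imset_card _ _) _; by rewrite cardsT.
  have : 0 < #|S| by rewrite hk.
  case/card_gt0P => e he.
  have hS0 : S :\ e \subset Y by apply: subset_trans hS; apply: subD1set.
  have hk0 : #|S :\ e| = k by move: hk; rewrite (cardsD1 e) he add1n => -[].
  have := IH _ hk0 hS0.
  have := forest_step hR hS0 (subsetP hS _ he) (negbT (setD11 e S)).
  rewrite setD1K //; move: hk (cardsD1 e S); rewrite he hk0 => -> ->; lia.
have := main _ _ erefl (subxx Y).
case: (set_0Vmem Y) => [->|[x hx]]; first by rewrite cards0.
have : 0 < #|classes Y|.
  by apply/card_gt0P; exists (cls Y x.1); apply: imset_f; rewrite inE.
lia.
Qed.

End Forest.


Section Upper.
Variables n m : nat.

Lemma ub_all k (Y : {set outcome n m * outcome n m}) :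
  (forall x, x \in Y -> is_swap x.1 x.2) -> shattered k Y -> #|Y| <= m ^ n - 1.
Proof.
move=> hsw hsh.
have -> : m ^ n = #|outcome n m| by rewrite /outcome card_ffun !card_ord.
apply: forest_bound => f.
have [N [[hwf [hac _]] hN]] := hsh f.
exists (Phi N) => x hx; rewrite -(hN x hx).
exact: concept_Phi hwf hac (hsw x hx).
Qed.

Lemma Pa0 N : in_Cac 0 N -> forall i (o o' : outcome n m), cpt N i o = cpt N i o'.
Proof.
move=> [[h1 [h2 _]] [_ hk]] i o o'; apply: h2 => j hj.
by move: (hk i); rewrite leqn0 => /eqP/cards0_eq hP; rewrite hP inE in hj.
Qed.

Lemma ub_var (o0 : outcome n m) i (Y : {set outcome n m * outcome n m}) :
  (forall x, x \in Y -> is_swap x.1 x.2) -> shattered 0 Y ->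
  #|[set x in Y | differ_only_at i x.1 x.2]| <= m - 1.
Proof.
move=> hsw hsh.
set Yi := [set x in Y | _].
pose pi (x : outcome n m * outcome n m) := (x.1 i, x.2 i).
have hinj : {in Yi &, injective pi}.
  move=> x y; rewrite !inE => /andP[hx hdx] /andP[hy hdy] hp.
  apply/eqP; apply/negP => /negP hxy.
  have [N [hC hN]] := hsh (fun z => z == x).
  have [hwf [hac _]] := hC.
  have := hN x hx; have := hN y hy; rewrite eqxx eq_sym (negbTE hxy).
  rewrite (concept_swap hwf hac hdx) (concept_swap hwf hac hdy).
  case: hp => -> ->; rewrite (Pa0 hC i x.2 y.2) => ->; by [].
rewrite -(card_in_imset hinj).
rewrite -[X in _ <= X - 1]card_ord.
apply: forest_bound => f.
have [N [hC hN]] := hsh (fun x => f (pi x)).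
have [hwf [hac _]] := hC.
exists (fun v => nat_of_ord (cpt N i o0 v)) => x' /imsetP[x hx ->].
move: (hx); rewrite inE => /andP[hxY hd].
rewrite -(hN x hxY) (concept_swap hwf hac hd) /prefers /= (Pa0 hC i x.2 o0).
case: ifP => // /negbT; rewrite -leqNgt leq_eqVlt => /orP[/eqP/val_inj/perm_inj e|//].
by move: (differ_neq hd); rewrite e eqxx.
Qed.

Lemma ub_sep (o0 : outcome n m) (Y : {set outcome n m * outcome n m}) :
  (forall x, x \in Y -> is_swap x.1 x.2) -> shattered 0 Y -> #|Y| <= (m - 1) * n.
Proof.
move=> hsw hsh.
rewrite -sum1_card.
apply: (@leq_trans (\sum_(x in Y) \sum_(i < n) (differ_only_at i x.1 x.2 : nat))).
  apply: leq_sum => x hx; have /existsP[i hd] := hsw x hx.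
  by rewrite (bigD1 i) //= hd.
rewrite exchange_big /= mulnC -[n in n * _]card_ord -sum_nat_const.
apply: leq_sum => i _.
apply: leq_trans (ub_var o0 i hsw hsh).
rewrite -sum1_card [X in _ <= X]big_mkcond [X in X <= _]big_mkcond /=.
apply: leq_sum => x _.
by rewrite inE; case: (x \in Y); case: (differ_only_at _ _ _).
Qed.

End Upper.


Section KP.
Variables (p : nat) (K : 'I_p -> nat).
Definition KK (x : 'I_p) := K x * p + x.
Definition rnk x := #|[set y | KK y < KK x]|.
Lemma rnk_lt x : rnk x < p.
Proof.
rewrite /rnk; apply: (@leq_ltn_trans #|[set: 'I_p] :\ x|).
  apply: subset_leq_card; apply/subsetP => y; rewrite !inE andbT => h; apply/eqP => e.
  by move: h; rewrite e ltnn.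
have := cardsD1 x [set: 'I_p]; rewrite inE cardsT card_ord add1n => e.
by rewrite [X in _ < X]e.
Qed.
Definition rnko x : 'I_p := Ordinal (rnk_lt x).
Lemma KK_inj : injective KK.
Proof.
move=> x y e; apply: val_inj.
have hx : KK x %% p = x by rewrite /KK modnMDl modn_small.
have hy : KK y %% p = y by rewrite /KK modnMDl modn_small.
by rewrite /= -hx -hy e.
Qed.
Lemma rnk_mono x y : KK x < KK y -> rnk x < rnk y.
Proof.
move=> h; apply: proper_card; apply/properP; split.
  apply/subsetP => z; rewrite !inE => hz; exact: ltn_trans hz h.
by exists x; rewrite !inE ?ltnn.
Qed.
Lemma rnko_inj : injective rnko.
Proof.
move=> x y /(congr1 val) /= e; apply: KK_inj.
case: (ltngtP (KK x) (KK y)) => // /rnk_mono; by rewrite e ltnn.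
Qed.
Definition kperm : {perm 'I_p} := perm rnko_inj.
Lemma KK_mono x y : K x < K y -> KK x < KK y.
Proof.
move=> h; rewrite /KK.
have : (K x).+1 * p <= K y * p by rewrite leq_mul2r h orbT.
have := ltn_ord x; rewrite mulSn; lia.
Qed.
Lemma kperm_lt x y : injective K -> (kperm x < kperm y) = (K x < K y).
Proof.
move=> hK; rewrite !permE /=.
case: (ltngtP (K x) (K y)) => h.
- by apply: rnk_mono; apply: KK_mono.
- apply/negbTE; rewrite -leqNgt; apply: ltnW; apply: rnk_mono; exact: KK_mono.
- by rewrite (hK _ _ h) ltnn.
Qed.
End KP.

Section Dep.
Variables (n m : nat) (T : eqType).
Definition relevantG (g : outcome n m -> T) (j : 'I_n) :=
  [exists o1 : outcome n m, exists o2 : outcome n m,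
    [forall l, (l != j) ==> (o1 l == o2 l)] && (g o1 != g o2)].

Lemma dep_reduce (g : outcome n m -> T) (Q : pred 'I_n) :
  (forall o o' : outcome n m, (forall j, Q j -> o j = o' j) -> g o = g o') ->
  forall o o' : outcome n m, (forall j, Q j && relevantG g j -> o j = o' j) -> g o = g o'.
Proof.
move=> hQ o o'; move eqd: #|[set j | o j != o' j]| => d.
elim: d o eqd => [|d IH] o hd hag.
  have -> : o = o'; last by [].
  apply/ffunP => j; apply/eqP; apply/negPn/negP => hj.
  by move/cards0_eq: hd => /setP/(_ j); rewrite !inE hj.
have : 0 < #|[set j | o j != o' j]| by rewrite hd.
case/card_gt0P => j; rewrite inE => hj.
pose o1 : outcome n m := [ffun l => if l == j then o' j else o l].
have hd1 : #|[set l | o1 l != o' l]| = d.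
  have -> : [set l | o1 l != o' l] = [set l | o l != o' l] :\ j.
    apply/setP => l; rewrite !inE ffunE; case: (l =P j) => [->|/eqP hne].
      by rewrite !eqxx.
    by [].

  by move: hd; rewrite (cardsD1 j) inE hj add1n => -[].
have e1 : g o = g o1.
  case hq: (Q j).
    have hnr : ~~ relevantG g j.
      apply/negP => hr; have := hag j; rewrite hq hr => /(_ isT) ej.
      by move: hj; rewrite ej eqxx.
    move: hnr => /existsPn/(_ o)/existsPn/(_ o1); rewrite negb_and negbK.
    case/orP => [/negP []|/eqP //].
    apply/forallP => l; apply/implyP => hl; by rewrite ffunE (negbTE hl).
  apply: hQ => l hl; rewrite ffunE; case: eqP => // el.
  by move: hl; rewrite el hq.
rewrite e1; apply: IH hd1 _ => l hl; rewrite ffunE; case: eqP => [-> //|_].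
exact: hag.
Qed.
End Dep.

Lemma connect_incr n (e : rel 'I_n) a b : (forall x y, e x y -> x < y) ->
  connect e a b -> a <= b.
Proof.
move=> he /connectP[p hp ->]; elim: p a hp => //= c p IH a /andP[h1 h2].
exact: leq_trans (ltnW (he _ _ h1)) (IH _ h2).
Qed.

Lemma card_lt_c n c : #|[set j : 'I_n | j < c]| <= c.
Proof.
case: (leqP c n) => hc; last first.
  by apply: leq_trans (max_card _) _; rewrite card_ord ltnW.
apply: (@leq_trans #|[set widen_ord hc l | l in 'I_c]|).
  apply: subset_leq_card; apply/subsetP => j; rewrite inE => hj.
  by apply/imsetP; exists (Ordinal hj) => //; apply: val_inj.
by apply: leq_trans (leq_imset_card _ _) _; rewrite card_ord.
Qed.


Section Lower.
Variables n m1 k : nat.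
Local Notation m := m1.+1.
Variable X : {set outcome n m * outcome n m}.
Hypothesis hX : swap_space X.

Definition cc (i : 'I_n) := minn i k.
Lemma cc_le_i i : cc i <= i. Proof. exact: geq_minl. Qed.
Lemma cc_le_n i : cc i <= n. Proof. exact: leq_trans (cc_le_i i) (ltnW (ltn_ord i)). Qed.
Lemma cc_le_k i : cc i <= k. Proof. exact: geq_minr. Qed.

Definition ctx (i : 'I_n) := {ffun 'I_(cc i) -> 'I_m}.
Definition Tf (i : 'I_n) : finType := (ctx i * 'I_m1)%type.
Definition Idx := {i : 'I_n & Tf i}.

Definition mko (i : 'I_n) (g : ctx i) (v : 'I_m) : outcome n m :=
  [ffun l => match (insub (val l) : option 'I_(cc i)) with
             | Some l' => g l' | None => if l == i then v else ord0 end].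
Arguments mko : clear implicits.

Definition lo (u : Idx) := mko (tag u) (tagged u).1 (widen_ord (leqnSn m1) (tagged u).2).
Definition hi (u : Idx) := mko (tag u) (tagged u).1 (lift ord0 (tagged u).2).
Definition sw (u : Idx) := if (lo u, hi u) \in X then (lo u, hi u) else (hi u, lo u).
Definition Ysh := [set sw u | u in [set: Idx]].

Definition gam i (o : outcome n m) : ctx i := [ffun l => o (widen_ord (cc_le_n i) l)].

Lemma gam_mko i g v : gam i (mko i g v) = g.
Proof.
apply/ffunP => l; rewrite !ffunE.
by rewrite (_ : insub _ = Some l) //; exact: valK.
Qed.

Lemma mko_i i g v : mko i g v i = v.
Proof. by rewrite ffunE insubN ?eqxx // -leqNgt cc_le_i. Qed.

Lemma mko_other i g v v' l : l != i -> mko i g v l = mko i g v' l.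
Proof. by move=> hl; rewrite !ffunE; case: insub => //; rewrite (negbTE hl). Qed.

Lemma lohi_neq (u : Idx) : widen_ord (leqnSn m1) (tagged u).2 != lift ord0 (tagged u).2.
Proof. by apply/eqP => /(congr1 val); rewrite /= /bump leq0n add1n => /n_Sn. Qed.

Lemma differ_lohi (u : Idx) : differ_only_at (tag u) (lo u) (hi u).
Proof.
apply/andP; split.
  apply/forallP => l; apply/implyP => hl; by rewrite /lo /hi (mko_other _ _ (lift ord0 (tagged u).2) hl).
by rewrite /lo /hi !mko_i lohi_neq.
Qed.

Lemma sw_in (u : Idx) : sw u \in X.
Proof.
rewrite /sw; case: ifP => // hl.
have hs : is_swap (lo u) (hi u) by apply/existsP; exists (tag u); exact: differ_lohi.
have := hX.2 _ _ hs.
by rewrite hl.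
Qed.

Lemma sw_differ (u : Idx) : differ_only_at (tag u) (sw u).1 (sw u).2.
Proof.
rewrite /sw; case: ifP => _ /=; first exact: differ_lohi.
by rewrite differ_sym; exact: differ_lohi.
Qed.

Lemma sw_min (u : Idx) : minn ((sw u).1 (tag u)) ((sw u).2 (tag u)) = (tagged u).2 :> nat.
Proof.
rewrite /sw; case: ifP => _ /=; rewrite /lo /hi !mko_i /= /bump leq0n add1n; lia.
Qed.

Lemma sw_gam1 (u : Idx) : gam (tag u) (sw u).1 = (tagged u).1.
Proof. by rewrite /sw; case: ifP => _ /=; rewrite gam_mko. Qed.
Lemma sw_gam2 (u : Idx) : gam (tag u) (sw u).2 = (tagged u).1.
Proof. by rewrite /sw; case: ifP => _ /=; rewrite gam_mko. Qed.

Lemma differ_uniq i j (o o' : outcome n m) :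
  differ_only_at i o o' -> differ_only_at j o o' -> i = j.
Proof.
move=> hi hj; apply/eqP/negP => /negP hij.
by move: (differ_neq hj); rewrite (differ_agree hi) ?eqxx // eq_sym.
Qed.

Lemma sw_inj : injective sw.
Proof.
move=> [i [g a]] [j [g' a']] e.
have h1 := sw_differ (Tagged Tf (g, a)).
have h2 := sw_differ (Tagged Tf (g', a')).
rewrite -e /= in h2; have hij := differ_uniq h1 h2; subst j.
have ea : a = a'.
  apply: val_inj; have := sw_min (Tagged Tf (g, a)); have := sw_min (Tagged Tf (g', a')).
  by rewrite -e /= => -> ->.
have eg : g = g'.
  have := sw_gam1 (Tagged Tf (g, a)); have := sw_gam1 (Tagged Tf (g', a')).
  by rewrite -e /= => -> ->.
by rewrite ea eg.
Qed.

End Lower.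


Section Keys.
Variable m : nat.
Definition keyn (b0 : nat -> bool) (v : nat) : nat :=
  if v == 0 then m else if b0 v.-1 then m - v else m + v.

Lemma keyn_lt b0 a : a.+1 < m -> (keyn b0 a.+1 < keyn b0 a) = b0 a.
Proof.
rewrite /keyn /= => ha; case hb: (b0 a); case: (a =P 0) => [e|ne].
- lia.
- case: (b0 a.-1); lia.
- apply/negbTE; rewrite -leqNgt; lia.
- apply/negbTE; rewrite -leqNgt; case: (b0 a.-1); lia.
Qed.

Lemma keyn_injn b0 v w : v < m -> w < m -> keyn b0 v = keyn b0 w -> v = w.
Proof.
move=> hv hw; rewrite /keyn; move: (b0 v.-1) (b0 w.-1) => b1 b2.
case: (v =P 0) => [->|hv0]; case: (w =P 0) => [->|hw0] //; case: b1; case: b2; lia.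
Qed.

Lemma keyn_inj b0 : injective (fun v : 'I_m => keyn b0 v).
Proof. move=> v w e; apply: val_inj; exact: keyn_injn (ltn_ord v) (ltn_ord w) e. Qed.
End Keys.

Section Net.
Variables n m1 k : nat.
Local Notation m := m1.+1.
Variable X : {set outcome n m * outcome n m}.
Hypothesis hX : swap_space X.
Variable f : outcome n m * outcome n m -> bool.

Definition bit (i : 'I_n) (g : ctx m1 k i) (a : 'I_m1) : bool :=
  let u := Tagged (Tf m1 k) (g, a) in
  if (sw X u).1 == hi u then f (sw X u) else ~~ f (sw X u).
Definition bitn (i : 'I_n) (g : ctx m1 k i) (t : nat) : bool :=
  if (insub t : option 'I_m1) is Some a then bit g a else false.
Definition cpt0 (i : 'I_n) (o : outcome n m) : {perm 'I_m} :=
  kperm (fun v : 'I_m => keyn m (bitn (gam k i o)) v).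
Definition PaF (i : 'I_n) := [set j : 'I_n | (j < cc k i) && relevantG (cpt0 i) j].
Definition NF := mkCPnet PaF cpt0.

Lemma NF_wf : wf_cpnet NF.
Proof.
split; [|split].
- move=> i; rewrite /= inE negb_and -leqNgt cc_le_i //.
- move=> i o o' /= h; apply: (dep_reduce (Q := fun j : 'I_n => j < cc k i)).
    move=> o1 o2 h12; rewrite /cpt0.
    have -> : gam k i o1 = gam k i o2.
      by apply/ffunP => l; rewrite !ffunE; apply: h12; rewrite /= ltn_ord.
    by [].
  by move=> j hj; apply: h; rewrite inE.
- move=> i j /=; rewrite inE => /andP[_ /existsP[o /existsP[o' /andP[/forallP h /eqP hne]]]].
  exists o, o'; split => // l hl; by move: (h l); rewrite hl => /eqP.
Qed.

Lemma NF_edge j i : cp_edge NF j i -> j < i.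
Proof.
rewrite /cp_edge /= inE => /andP[h _]; exact: leq_trans h (cc_le_i _ _).
Qed.

Lemma NF_in : in_Cac k NF.
Proof.
split; first exact: NF_wf.
split.
  move=> i j /NF_edge hji; apply/negP => /(connect_incr NF_edge); rewrite leqNgt hji.
  by [].
move=> i; apply: leq_trans (cc_le_k k i).
apply: leq_trans (card_lt_c n (cc k i)).
by apply: subset_leq_card; apply/subsetP => j; rewrite /= !inE => /andP[].
Qed.

Lemma NF_real x : x \in Ysh k X -> concept NF x = f x.
Proof.
case/imsetP => -[i [g a]] _ ->.
set u := Tagged (Tf m1 k) (g, a).
have [hwf [hac _]] := NF_in.
rewrite (concept_swap hwf hac (sw_differ X u)) /= /cpt0.
rewrite (sw_gam2 X u) /prefers kperm_lt; last exact: keyn_inj.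
have hb : bitn g a = bit g a by rewrite /bitn valK.
have hlt : (keyn m (bitn g) (lift ord0 a) < keyn m (bitn g) (widen_ord (leqnSn m1) a)) = bit g a.
  by rewrite /= /bump leq0n add1n keyn_lt ?hb //= ltnS.
have hne : keyn m (bitn g) (lift ord0 a) != keyn m (bitn g) (widen_ord (leqnSn m1) a).
  apply/eqP => /(@keyn_inj m (bitn g)) /eqP; rewrite eq_sym; apply/negP; exact: (lohi_neq u).
have elo : lo u i = widen_ord (leqnSn m1) a := mko_i _ _.
have ehi : hi u i = lift ord0 a := mko_i _ _.
have hlh : (lo u == hi u) = false.
  apply/negbTE/negP => /eqP e; have := differ_neq (differ_lohi u); by rewrite e eqxx.
case hin: ((lo u, hi u) \in X).
  have esw : sw X u = (lo u, hi u) by rewrite /sw hin.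
  rewrite /bit -/u esw /= hlh in hlt; rewrite esw /= elo ehi.
  move: hlt hne; rewrite neq_ltn; case: (f _) => /=.
    by move=> /negbT; rewrite -leqNgt leq_eqVlt => /orP[/eqP ->|->]; rewrite ?ltnn ?orbT.
  by move=> h _; apply/negbTE; rewrite -leqNgt; exact: ltnW h.
have esw : sw X u = (hi u, lo u) by rewrite /sw hin.
rewrite /bit -/u esw /= eqxx in hlt; by rewrite esw /= elo ehi.
Qed.

End Net.


Lemma sum_formula m1 k N :
  \sum_(0 <= i < N) m1.+1 ^ (minn i k) * m1 + 1 = m1.+1 ^ (minn N k) + (N - k) * m1.+1 ^ k * m1.
Proof.
elim: N => [|N IH]; first by rewrite big_nil min0n expn0 sub0n.
rewrite big_nat_recr // -addnA [_ * m1 + 1]addnC addnA IH.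
case: (ltnP N k) => h.
  have -> : N.+1 - k = 0 by apply/eqP; rewrite subn_eq0.
  have -> : N - k = 0 by apply/eqP; rewrite subn_eq0 ltnW.
  have -> : minn N.+1 k = N.+1 by apply/minn_idPl.
  rewrite !mul0n !addn0 expnS mulSn; set t := m1.+1 ^ N; rewrite [t * m1]mulnC; lia.
have -> : minn N.+1 k = k by apply/minn_idPr; exact: leqW.
rewrite subSn //; set t := m1.+1 ^ k; rewrite mulSn; lia.
Qed.

Section LB.
Variables n m1 k : nat.
Local Notation m := m1.+1.
Variable X : {set outcome n m * outcome n m}.
Hypothesis hX : swap_space X.

Lemma lb : k <= n -> VCD_ge k X (m1 * (n - k) * m ^ k + m ^ k - 1).
Proof.
move=> hk; exists (Ysh k X); split; [|split].
- by apply/subsetP => x /imsetP[u _ ->]; exact: sw_in.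
- move=> f; exists (NF k X f); split; first exact: NF_in.
  exact: NF_real.
rewrite card_in_imset; last by move=> u v _ _; exact: sw_inj.
rewrite cardsT card_tagged sumnE big_map big_enum /=.
have e : \sum_(i in 'I_n) #|Tf m1 k i| = \sum_(i < n) m ^ (minn i k) * m1.
  apply: eq_bigr => i _; by rewrite /Tf card_prod /ctx card_ffun !card_ord.
rewrite e -(big_mkord xpredT (fun i => m ^ (minn i k) * m1)).
have := sum_formula m1 k n; rewrite (minn_idPr hk).
set S := \sum_(0 <= i < n) _; set t := m ^ k; lia.
Qed.
End LB.

Unset Implicit Arguments.

Theorem theorem1 (n m : nat) (hn : 1 <= n) (hm : 2 <= m)
    (X : {set outcome n m * outcome n m}) (hX : swap_space X) :
  VCD_is (n - 1) X (m ^ n - 1) /\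
  VCD_is 0 X ((m - 1) * n) /\
  (forall k : nat, k <= n - 1 ->
     VCD_ge k X ((m - 1) * (n - k) * m ^ k + m ^ k - 1)).
Proof.
case: m hm X hX => [//|m1] hm X hX.
have hsw : forall Y : {set outcome n m1.+1 * outcome n m1.+1}, Y \subset X ->
    forall x, x \in Y -> is_swap x.1 x.2.
  by move=> Y hY x hx; apply: hX.1; exact: (subsetP hY).
have e1 : m1.+1 - 1 = m1 by rewrite subn1.
rewrite e1.
have p3 : forall k : nat, k <= n - 1 ->
    VCD_ge k X (m1 * (n - k) * m1.+1 ^ k + m1.+1 ^ k - 1).
  move=> k hk; apply: lb => //; lia.
split; [|split] => //.
- split.
    have [Y [hY [hsh hc]]] := p3 (n - 1) (leqnn _).
    exists Y; split => //; split => //.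
    apply/eqP; rewrite eqn_leq (ub_all (hsw _ hY) hsh) /=.
    apply: leq_trans hc.
    case: n hn X hX hsw p3 Y hY hsh => [//|n1] _ X hX hsw p3 Y hY hsh.
    have -> : n1.+1 - (n1.+1 - 1) = 1 by lia.
    have -> : n1.+1 - 1 = n1 by lia.
    rewrite muln1 expnS mulSn; set t := m1.+1 ^ n1; lia.
  by move=> Y hY hsh; exact: ub_all (hsw _ hY) hsh.
- split.
    have [Y [hY [hsh hc]]] := p3 0 (leq0n _).
    exists Y; split => //; split => //.
    have := ub_sep [ffun => ord0] (hsw _ hY) hsh; rewrite e1.
    by move: hc; rewrite subn0 expn0 muln1 addnK => h1 h2; apply/eqP; rewrite eqn_leq h1 h2.
  by move=> Y hY hsh; have := ub_sep [ffun => ord0] (hsw _ hY) hsh; rewrite e1.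
Qed.
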